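(* Let $\mathcal{X},\mathcal{Y}$ be finite sets and $p(X,Y)$ a distribution on $\mathcal{X}\times\mathcal{Y}$ with fully supported marginals. Let $q\in C(\mathcal{X}\times\mathcal{Y},\mathcal{T})$ satisfy $D(q(T)\|\tilde q(T))=D(p(X,Y)\|p(X)p(Y))$, and define $q'\in C(\mathcal{X}\times\mathcal{Y},\mathcal{T})$ by $q'(t|x,y)=\sum_{j=1}^n q(t|\mathcal{T}^q_j)\,q(\mathcal{T}^q_j|x,y)$ for $(x,y)\in\mathcal{S}$ and $q'(t|x,y)=q(t|x,y)$ for $(x,y)\notin\mathcal{S}$. Then: (i) for $(x,y)\in\mathcal{S}$ and every $j$, $q(\mathcal{T}^q_j|x,y)=\delta_{(x,y)\in\mathcal{S}_j}$; (ii) $q'(T)=q(T)$; (iii) $\mathcal{T}^q_j=\mathcal{T}^{q'}_j$ for all $j$; (iv) $I_q(X,Y;T)\ge I_{q'}(X,Y;T)$, with equality if and only if $q=q'$.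
   Context: $\mathcal{T}:=\mathbb{N}$; $C(\mathcal{A},\mathcal{B})$ is the set of channels from $\mathcal{A}$ to $\mathcal{B}$. For a channel $r\in C(\mathcal{X}\times\mathcal{Y},\mathcal{T})$, $r(T)$ and $\tilde r(T)$ are the marginals on $\mathcal{T}$ of $p(x,y)r(t|x,y)$ and $p(x)p(y)r(t|x,y)$, and $I_r(X,Y;T)$ is the mutual information under $p(x,y)r(t|x,y)$; $D$ is KL divergence. For $A\subseteq\mathcal{T}$: $q(A)=\sum_{t\in A}q(t)$, $q(A|x,y)=\sum_{t\in A}q(t|x,y)$, $q(t|A)=\frac{q(t)}{q(A)}\delta_{t\in A}$. $\mathcal{S}=\operatorname{supp}p(X,Y)$; $(x,y)\sim(x',y')$ iff $\frac{p(x,y)}{p(x)p(y)}=\frac{p(x',y')}{p(x')p(y')}$, whose classes contained in $\mathcal{S}$ are $\mathcal{S}_1,\dots,\mathcal{S}_n$. For a channel $r$, $\mathcal{T}^r_j:=\{t\in\mathcal{T}:\exists(x,y)\in\mathcal{S}_j,\ r(t|x,y)>0\}$. *)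

(* Defs.v *)
From HB Require Import structures.
From mathcomp Require Import all_boot all_order all_algebra.
From mathcomp Require Import all_classical all_reals.
From mathcomp Require Import ereal topology normedtype sequences esum exp.
Set Implicit Arguments. Unset Strict Implicit. Unset Printing Implicit Defensive.
Import Order.TTheory GRing.Theory Num.Theory.
Local Open Scope ring_scope.
Local Open Scope classical_set_scope.

Section Defs.
Variable R : realType.

Definition xsum (I : choiceType) (f : I -> \bar R) : \bar R :=
  (\esum_(i in [set: I]) maxe (f i) 0%E - \esum_(i in [set: I]) maxe (- f i) 0%E)%E.

Definition kl_term (I : choiceType) (P Q : I -> R) (i : I) : \bar R :=
  if P i == 0 then 0%E
  else if Q i == 0 then +oo%E
  else (P i * ln (P i / Q i))%:E.

Definition KL (I : choiceType) (P Q : I -> R) : \bar R := xsum (kl_term P Q).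

Variables X Y : finType.

Definition is_dist (p : X * Y -> R) : Prop :=
  (forall z, 0 <= p z) /\ \sum_(z : X * Y) p z = 1.

Definition pX (p : X * Y -> R) (x : X) : R := \sum_(y : Y) p (x, y).
Definition pY (p : X * Y -> R) (y : Y) : R := \sum_(x : X) p (x, y).

Definition pXpY (p : X * Y -> R) (z : X * Y) : R := pX p z.1 * pY p z.2.

(* channels in C(X x Y, T) with T = nat: q z t = q(t|z) *)
Definition channel (q : X * Y -> nat -> R) : Prop :=
  (forall z t, 0 <= q z t) /\
  (forall z, (\sum_(0 <= t <oo) (q z t)%:E)%E = 1%E).

Definition outT (p : X * Y -> R) (r : X * Y -> nat -> R) (t : nat) : R :=
  \sum_(z : X * Y) p z * r z t.
Definition outTt (p : X * Y -> R) (r : X * Y -> nat -> R) (t : nat) : R :=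
  \sum_(z : X * Y) pXpY p z * r z t.

Definition MI (p : X * Y -> R) (r : X * Y -> nat -> R) : \bar R :=
  KL (fun w : X * Y * nat => p w.1 * r w.1 w.2)
     (fun w : X * Y * nat => p w.1 * outT p r w.2).

Definition setsum (f : nat -> R) (A : set nat) : R :=
  fine (\esum_(t in A) (f t)%:E)%E.

Definition condA (f : nat -> R) (A : set nat) (t : nat) : R :=
  if `[< A t >] then f t / setsum f A else 0.

Definition supp (p : X * Y -> R) : {set X * Y} := [set z | p z != 0].

Definition ratio (p : X * Y -> R) (z : X * Y) : R := p z / pXpY p z.

Definition classes (p : X * Y -> R) : {set {set X * Y}} :=
  [set [set z in supp p | ratio p z == ratio p z0] | z0 in supp p].

Definition Tset (r : X * Y -> nat -> R) (C : {set X * Y}) : set nat :=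
  [set t | exists2 z, z \in C & 0 < r z t].

Definition qprime (p : X * Y -> R) (q : X * Y -> nat -> R)
    (z : X * Y) (t : nat) : R :=
  if z \in supp p then
    \sum_(C in classes p) condA (outT p q) (Tset q C) t * setsum (q z) (Tset q C)
  else q z t.

End Defs.

(* Main.v *)
Require Import Defs.
From HB Require Import structures.
From mathcomp Require Import all_boot all_order all_algebra.
From mathcomp Require Import all_classical all_reals.
From mathcomp Require Import ereal topology normedtype sequences esum exp.
From mathcomp Require Import ring lra.
Import Order.TTheory GRing.Theory Num.Theory.
Local Open Scope ring_scope.
Local Open Scope classical_set_scope.
Section Gen.
Context {R : realType}.

Lemma ln_le_sub1 (y : R) : 0 < y -> ln y <= y - 1.
Proof. move=> y0; have := expR_ge1Dx (ln y); rewrite lnK ?posrE//; lra. Qed.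

Lemma ln_eq_sub1 (y : R) : 0 < y -> ln y = y - 1 -> y = 1.
Proof.
move=> y0 h; apply/eqP; rewrite -(ln_eq0 y0); apply/negPn/negP => hn.
have := expR_gt1Dx hn; rewrite lnK ?posrE//; lra.
Qed.

Lemma maxr_posneg (x : R) : Num.max x 0 - Num.max (- x) 0 = x.
Proof.
rewrite !maxEle; case: (lerP x 0) => h1; case: (lerP (-x) 0) => h2; lra.
Qed.

Lemma esumT_fin (T : finType) (g : T -> \bar R) : (forall z, (0 <= g z)%E) ->
  (\esum_(z in [set: T]) g z = \sum_(z : T) g z)%E.
Proof.
move=> g0; rewrite esum_fset//; last exact: finite_finset.
rewrite (fsbigE (enum T)) ?enum_uniq//.
by under eq_bigl do rewrite in_setT; rewrite big_enum.
by move=> i _; rewrite mem_enum.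
Qed.

Lemma esumZ_nat (A : set nat) (c : R) (f : nat -> R) : 0 <= c ->
  (forall t, 0 <= f t) ->
  (\esum_(t in A) (c * f t)%:E = c%:E * \esum_(t in A) (f t)%:E)%E.
Proof.
move=> c0 f0; rewrite esum_mkcond [X in (_ * X)%E]esum_mkcond.
rewrite -!nneseries_esumT; last 2 first.
- by move=> n; case: ifP => // _; rewrite lee_fin.
- by move=> n; case: ifP => // _; rewrite lee_fin mulr_ge0.
rewrite -nneseriesZl; last by move=> n _; case: ifP => // _; rewrite lee_fin.
by apply: eq_eseriesr => t _; case: ifP => _; rewrite ?EFinM ?mule0.
Qed.

Lemma xsum_fin (T : finType) (k : T -> R) :
  xsum (fun z => (k z)%:E) = (\sum_z k z)%:E.
Proof.
rewrite /xsum.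
have E1 : forall x : R, maxe x%:E 0%E = (Num.max x 0)%:E by move=> x; rewrite EFin_max.
under eq_esum do rewrite E1.
under [X in (_ - X)%E]eq_esum do rewrite -EFinN E1.
rewrite !esumT_fin; last 2 first.
- by move=> z; rewrite lee_fin le_max lexx orbT.
- by move=> z; rewrite lee_fin le_max lexx orbT.
rewrite !sumEFin -EFinB -sumrB.
by under eq_bigr do rewrite maxr_posneg.
Qed.

End Gen.

Section Gen2.
Context {R : realType}.

Lemma xsumE (I : choiceType) (k : I -> R) : xsum (fun i => (k i)%:E) =
  (\esum_(i in [set: I]) (Num.max (k i) 0)%:E -
   \esum_(i in [set: I]) (Num.max (- k i) 0)%:E)%E.
Proof.
rewrite /xsum.
have E1 : forall x : R, maxe x%:E 0%E = (Num.max x 0)%:E by move=> x; rewrite EFin_max.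
under eq_esum do rewrite E1.
by under [X in (_ - X)%E]eq_esum do rewrite -EFinN E1.
Qed.

Lemma esum_ge1 (I : choiceType) (f : I -> \bar R) i : (forall j, (0 <= f j)%E) ->
  (f i <= \esum_(j in [set: I]) f j)%E.
Proof.
move=> f0; apply: esum_ge; exists [set i].
  by split; [exact: finite_set1|].
by rewrite fsbig_set1.
Qed.

End Gen2.
Section Main.
Context {R : realType} {X Y : finType} (p : X * Y -> R) (q : X * Y -> nat -> R).
Hypothesis p0 : forall z, 0 <= p z.
Hypothesis psum : \sum_z p z = 1.
Hypothesis pXpos : forall x, 0 < pX p x.
Hypothesis pYpos : forall y, 0 < pY p y.
Hypothesis q0 : forall z t, 0 <= q z t.
Hypothesis q1 : forall z, (\sum_(0 <= t <oo) (q z t)%:E)%E = 1%E.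

Local Notation a := (outT p q).
Local Notation b := (outTt p q).
Local Notation w := (pXpY p).
Local Notation r := (Defs.ratio p).

Lemma w_pos z : 0 < w z.
Proof. by rewrite /pXpY mulr_gt0. Qed.

Lemma esq1 z : (\esum_(t in [set: nat]) (q z t)%:E)%E = 1%E.
Proof. by rewrite -nneseries_esumT// => n; rewrite lee_fin. Qed.

Lemma esum_lin (d : X * Y -> R) : (forall z, 0 <= d z) ->
  (\esum_(t in [set: nat]) (\sum_z d z * q z t)%:E)%E = (\sum_z d z)%:E.
Proof.
move=> d0; under eq_esum do rewrite -sumEFin.
rewrite esum_sum; last by move=> t z _ _; rewrite lee_fin mulr_ge0.
under eq_bigr do rewrite esumZ_nat// esq1 mule1.
by rewrite sumEFin.
Qed.

Lemma a_ge0 t : 0 <= a t.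
Proof. by apply: sumr_ge0 => z _; rewrite mulr_ge0. Qed.

Lemma a_ge z t : p z * q z t <= a t.
Proof.
rewrite /outT (bigD1 z)//= lerDl; apply: sumr_ge0 => i _; exact: mulr_ge0.
Qed.

Lemma b_gt0 t : 0 < a t -> 0 < b t.
Proof.
move=> at0; have b0 : 0 <= b t.
  by apply: sumr_ge0 => z _; rewrite mulr_ge0 // ltW // w_pos.
rewrite lt_def b0 andbT; apply/eqP => b00.
have H := psumr_eq0P (fun z _ => mulr_ge0 (ltW (w_pos z)) (q0 z t)) b00.
suff : a t = 0 by move=> h; rewrite h ltxx in at0.
rewrite /outT big1 // => z _.
have := H z isT; move/eqP; rewrite mulf_eq0 gt_eqF ?w_pos //= => /eqP ->.
by rewrite mulr0.
Qed.

Lemma kl_ab t : kl_term a b t = (a t * ln (a t / b t))%:E.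
Proof.
rewrite /kl_term; case: ifPn => [/eqP ->|an0]; first by rewrite mul0r.
have at0 : 0 < a t by rewrite lt_def an0 a_ge0.
by rewrite gt_eqF ?b_gt0.
Qed.

Lemma kl_pw z : kl_term p w z = (p z * ln (r z))%:E.
Proof.
rewrite /kl_term /Defs.ratio; case: ifPn => [/eqP ->|_]; first by rewrite mul0r.
by rewrite gt_eqF ?w_pos.
Qed.

Lemma KLpw : KL p w = (\sum_z p z * ln (r z))%:E.
Proof. by rewrite /KL (funext kl_pw) xsum_fin. Qed.

Lemma delta_key t z : 0 < a t ->
  let L := ln (a t / b t) in
  0 <= (p z * ln (r z) * q z t - p z * q z t * L)
        - (p z * q z t - a t / b t * (w z * q z t)) /\
  ((p z * ln (r z) * q z t - p z * q z t * L)
        - (p z * q z t - a t / b t * (w z * q z t)) = 0 ->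
   0 < p z -> 0 < q z t -> r z = a t / b t).
Proof.
move=> at0 L; have bt0 := b_gt0 t at0.
case: (eqVneq (p z * q z t) 0) => [pq0|pqn0].
  have e1 : p z * ln (r z) * q z t = 0 by rewrite mulrAC pq0 mul0r.
  rewrite e1 pq0 mul0r !subrr sub0r; split.
    rewrite sub0r opprK; apply: mulr_ge0; [apply: divr_ge0; [exact: a_ge0|exact: ltW]|apply: mulr_ge0; [exact: ltW (w_pos z)|exact: q0]].
  by move=> _ pz qz; move: pq0; move/eqP; rewrite mulf_eq0 !gt_eqF.
have pz : 0 < p z.
  by rewrite lt_def p0 andbT; apply: contraNneq pqn0 => ->; rewrite mul0r.
have qz : 0 < q z t.
  by rewrite lt_def q0 andbT; apply: contraNneq pqn0 => ->; rewrite mulr0.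
have rz : 0 < r z by rewrite /Defs.ratio divr_gt0 ?w_pos.
have abpos : 0 < a t / b t by rewrite divr_gt0.
set v := a t / b t / r z.
have vpos : 0 < v by rewrite divr_gt0.
have vr : v * r z = a t / b t by rewrite /v divfK ?gt_eqF.
have rw : r z * w z = p z by rewrite /Defs.ratio divfK ?gt_eqF ?w_pos.
have Lv : L = ln v + ln (r z) by rewrite /L -vr lnM ?posrE.
have e2 : a t / b t * (w z * q z t) = v * (p z * q z t).
  by rewrite -vr -rw; ring.
rewrite Lv e2.
have -> : p z * ln (r z) * q z t - p z * q z t * (ln v + ln (r z)) -
    (p z * q z t - v * (p z * q z t)) = p z * q z t * (v - 1 - ln v) by ring.
have hl := ln_le_sub1 v vpos.
split; first by apply: mulr_ge0; [exact: ltW (mulr_gt0 pz qz)|lra].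
move=> /eqP; rewrite mulf_eq0 (negbTE pqn0) /= => /eqP h _ _.
have v1 : v = 1 by apply: ln_eq_sub1 => //; lra.
by rewrite -vr v1 mul1r.
Qed.

Lemma delta t :
  0 <= \sum_z p z * ln (r z) * q z t - a t * ln (a t / b t) /\
  (\sum_z p z * ln (r z) * q z t - a t * ln (a t / b t) = 0 ->
   forall z, 0 < p z -> 0 < q z t -> r z = a t / b t).
Proof.
case: (eqVneq (a t) 0) => [a00|an0].
  have H := psumr_eq0P (fun z _ => mulr_ge0 (p0 z) (q0 z t)) a00.
  have S0 : \sum_z p z * ln (r z) * q z t = 0.
    by apply: big1 => z _; rewrite mulrAC (H z isT) mul0r.
  rewrite S0 a00 mul0r subrr; split=> // _ z pz qz.
  by have := H z isT; move/eqP; rewrite mulf_eq0 !gt_eqF.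
have at0 : 0 < a t by rewrite lt_def an0 a_ge0.
have bt0 := b_gt0 t at0.
set L := ln (a t / b t).
have s1 : \sum_z p z * q z t * L = a t * L by rewrite -mulr_suml.
have s2 : \sum_z a t / b t * (w z * q z t) = a t.
  by rewrite -mulr_sumr divfK // gt_eqF.
have s3 : \sum_z p z * q z t = a t by [].
have E : \sum_z p z * ln (r z) * q z t - a t * L =
  \sum_z ((p z * ln (r z) * q z t - p z * q z t * L)
        - (p z * q z t - a t / b t * (w z * q z t))).
  by rewrite !sumrB s1 s2 s3 subrr subr0.
rewrite E; split.
  by apply: sumr_ge0 => z _; case: (delta_key t z at0).
move=> h0 z pz qz.
have := psumr_eq0P (fun z _ => proj1 (delta_key t z at0)) h0.
by move=> /(_ z isT) h; case: (delta_key t z at0) => _ /(_ h pz qz).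
Qed.

Lemma Delta0 : KL a b = KL p w -> forall t,
  \sum_z p z * ln (r z) * q z t - a t * ln (a t / b t) = 0.
Proof.
move=> HKL.
pose c := fun z => p z * ln (r z).
pose k := fun t => a t * ln (a t / b t).
pose D := fun t => \sum_z p z * ln (r z) * q z t - k t.
pose P := fun t => \sum_z Num.max (c z) 0 * q z t.
pose N := fun t => \sum_z Num.max (- c z) 0 * q z t.
have D0 t : 0 <= D t by exact: (proj1 (delta t)).
have mx0 (x : R) : 0 <= Num.max x 0 by rewrite le_max lexx orbT.
have P0 t : 0 <= P t by apply: sumr_ge0 => z _; rewrite mulr_ge0.
have N0 t : 0 <= N t by apply: sumr_ge0 => z _; rewrite mulr_ge0.
have pw t : Num.max (k t) 0 + N t + D t = P t + Num.max (- k t) 0.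
  have h1 : P t - N t = \sum_z p z * ln (r z) * q z t.
    by rewrite /P /N -sumrB; apply: eq_bigr => z _; rewrite -mulrBl maxr_posneg.
  have h2 := maxr_posneg (k t).
  rewrite /D; lra.
have HK : KL a b = (\esum_(t in [set: nat]) (Num.max (k t) 0)%:E -
   \esum_(t in [set: nat]) (Num.max (- k t) 0)%:E)%E.
  by rewrite /KL (funext kl_ab) xsumE.
have EP : (\esum_(t in [set: nat]) (P t)%:E)%E = (\sum_z Num.max (c z) 0)%:E.
  by apply: esum_lin.
have EN : (\esum_(t in [set: nat]) (N t)%:E)%E = (\sum_z Num.max (- c z) 0)%:E.
  by apply: esum_lin.
have HEq : (\esum_(t in [set: nat]) (Num.max (k t) 0)%:E +
           \esum_(t in [set: nat]) (N t)%:E +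
           \esum_(t in [set: nat]) (D t)%:E =
           \esum_(t in [set: nat]) (P t)%:E +
           \esum_(t in [set: nat]) (Num.max (- k t) 0)%:E)%E.
  rewrite -!esumD; try by move=> t _; rewrite ?adde_ge0 ?lee_fin.
  by apply: eq_esum => t _; rewrite -!EFinD pw.
rewrite HK KLpw in HKL.
have fk : ((\esum_(t in [set: nat]) (Num.max (k t) 0)%:E)%E \is a fin_num) &&
          ((\esum_(t in [set: nat]) (Num.max (- k t) 0)%:E)%E \is a fin_num).
  by rewrite -fin_numB HKL.
case/andP: fk => fk1 fk2.
have fD : (\esum_(t in [set: nat]) (D t)%:E)%E \is a fin_num.
  have : (\esum_(t in [set: nat]) (P t)%:E +
           \esum_(t in [set: nat]) (Num.max (- k t) 0)%:E)%E \is a fin_num.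
    by rewrite fin_numD EP fk2.
  by rewrite -HEq !fin_numD => /andP[_ ->].
rewrite -(fineK fk1) -(fineK fk2) in HKL HEq.
rewrite -(fineK fD) EP EN in HEq.
move: HKL HEq; rewrite -EFinB -!EFinD => -[HKL] -[HEq].
have hc : \sum_z p z * ln (r z) =
    \sum_z Num.max (c z) 0 - \sum_z Num.max (- c z) 0.
  by rewrite -sumrB; apply: eq_bigr => z _; rewrite maxr_posneg.
have fD0 : fine (\esum_(t in [set: nat]) (D t)%:E)%E = 0 by lra.
move=> t; apply/eqP; rewrite eq_le (D0 t) andbT.
have := @esum_ge1 R nat (fun t => (D t)%:E) t (fun j => D0 j).
by rewrite -(fineK fD) fD0 lee_fin.
Qed.

Definition cl z := [set z' in supp p | Defs.ratio p z' == Defs.ratio p z].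

Lemma supp_pos z : z \in supp p -> 0 < p z.
Proof. by rewrite inE lt_def p0 andbT. Qed.
Arguments supp_pos {z}.

Lemma nsupp0 z : z \notin supp p -> p z = 0.
Proof. by rewrite inE negbK => /eqP. Qed.
Arguments nsupp0 {z}.

Lemma in_cl z' z : (z' \in cl z) = (z' \in supp p) && (r z' == r z).
Proof. by rewrite inE. Qed.

Lemma cl_eq z z' : r z = r z' -> cl z = cl z'.
Proof. by move=> h; apply/setP => u; rewrite !in_cl h. Qed.

Lemma self_cl z : z \in supp p -> z \in cl z.
Proof. by move=> hz; rewrite in_cl hz eqxx. Qed.
Arguments self_cl {z}.

Lemma cl_in z : z \in supp p -> cl z \in classes p.
Proof. by move=> hz; apply/imsetP; exists z. Qed.
Arguments cl_in {z}.

Lemma classes_cl C : C \in classes p -> exists2 z0, z0 \in supp p & C = cl z0.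
Proof. by case/imsetP => z0 hz0 ->; exists z0. Qed.
Arguments classes_cl {C}.

Lemma classes_mem C z : C \in classes p -> z \in C -> C = cl z.
Proof.
case/classes_cl => z0 _ ->; rewrite in_cl => /andP[_ /eqP e].
by apply: cl_eq; rewrite e.
Qed.
Arguments classes_mem {C z}.

Lemma classes_supp C z : C \in classes p -> z \in C -> z \in supp p.
Proof. by case/classes_cl => z0 _ ->; rewrite in_cl => /andP[]. Qed.
Arguments classes_supp {C z}.

Section WithHKL.
Hypothesis HKL : KL a b = KL p w.

Lemma Kcond t z z' : 0 < p z -> 0 < p z' -> 0 < q z t -> 0 < q z' t ->
  r z = r z'.
Proof.
move=> pz pz' qz qz'.
have [_ H] := delta t.
by rewrite (H (Delta0 HKL t) z pz qz) (H (Delta0 HKL t) z' pz' qz').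
Qed.

Lemma T_of z t C : z \in supp p -> 0 < q z t -> C \in classes p ->
  (Tset q C t <-> C = cl z).
Proof.
move=> hz qz hC; split.
  case=> z' hz' qz'.
  rewrite (classes_mem hC hz'); apply: cl_eq.
  apply: (Kcond t) => //; last exact: supp_pos.
  exact/supp_pos/(classes_supp hC hz').
by move=> ->; exists z => //; exact: self_cl.
Qed.
Arguments T_of {z t C}.

Lemma esum_i z C : z \in supp p -> C \in classes p ->
  (\esum_(t in Tset q C) (q z t)%:E)%E = (if z \in C then 1 else 0)%:E.
Proof.
move=> hz hC; case: ifPn => zC.
  rewrite esum_mkcond -(esq1 z); apply: eq_esum => t _.
  case: ifPn => // /negP ht; apply/eqP; rewrite eq_sym eqe.
  apply/eqP/le_anti; rewrite q0 andbT leNgt; apply/negP => qz.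
  apply: ht; rewrite inE; apply/(T_of hz qz hC).
  exact: classes_mem hC zC.
apply: esum1 => t ht; apply/eqP; rewrite eqe.
apply/eqP/le_anti; rewrite q0 andbT leNgt; apply/negP => qz.
have := (T_of hz qz hC).1 ht => e.
by move: zC; rewrite e self_cl.
Qed.
Arguments esum_i {z C}.

Definition pC (C : {set X * Y}) := \sum_(z in C) p z.

Lemma esum_a C : C \in classes p ->
  (\esum_(t in Tset q C) (a t)%:E)%E = (pC C)%:E.
Proof.
move=> hC; rewrite /outT.
under eq_esum do rewrite -sumEFin.
rewrite esum_sum; last by move=> t z _ _; rewrite lee_fin mulr_ge0.
under eq_bigr do rewrite esumZ_nat//.
rewrite /pC -sumEFin [RHS]big_mkcond /=; apply: eq_bigr => z _.
case: (boolP (z \in supp p)) => hz.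
  by rewrite esum_i //; case: ifP => _; rewrite ?mule1 ?mule0.
by rewrite nsupp0 // mul0e; case: ifP.
Qed.


Lemma setsum_i z C : z \in supp p -> C \in classes p ->
  setsum (q z) (Tset q C) = if z \in C then 1 else 0.
Proof. by move=> hz hC; rewrite /setsum esum_i //; case: ifP. Qed.

Lemma setsum_a C : C \in classes p -> setsum a (Tset q C) = pC C.
Proof. by move=> hC; rewrite /setsum esum_a. Qed.

Lemma pC_gt0 C : C \in classes p -> 0 < pC C.
Proof.
case/classes_cl => z0 hz0 ->; rewrite /pC (bigD1 z0) ?self_cl //=.
apply: (lt_le_trans (supp_pos hz0)); rewrite lerDl.
by apply: sumr_ge0 => i _; exact: p0.
Qed.

Lemma pC_le1 C : pC C <= 1.
Proof.
rewrite -psum /pC big_mkcond /=; apply: ler_sum => z _.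
by case: ifP => _; rewrite ?p0.
Qed.

Definition gq z t := if `[< Tset q (cl z) t >] then a t / pC (cl z) else 0.

Lemma qp_supp z t : z \in supp p -> qprime p q z t = gq z t.
Proof.
move=> hz; rewrite /qprime hz (bigD1 (cl z)) ?cl_in //=.
rewrite setsum_i ?cl_in // self_cl // mulr1 big1 ?addr0.
  by rewrite /condA setsum_a ?cl_in.
move=> C /andP[hC hne]; rewrite setsum_i //; case: ifPn; last by rewrite mulr0.
by move=> zC; move: hne; rewrite (classes_mem hC zC) eqxx.
Qed.

Lemma qp_nsupp z t : z \notin supp p -> qprime p q z t = q z t.
Proof. by move=> hz; rewrite /qprime (negbTE hz). Qed.

Lemma gq_ge0 z t : 0 <= gq z t.
Proof.
rewrite /gq; case: asboolP => // _.
case: (boolP (z \in supp p)) => hz; last first.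
  by rewrite divr_ge0 ?a_ge0 // /pC sumr_ge0.
by rewrite divr_ge0 ?a_ge0 // ltW // pC_gt0 // cl_in.
Qed.

Lemma qp_ge0 z t : 0 <= qprime p q z t.
Proof.
case: (boolP (z \in supp p)) => hz; first by rewrite qp_supp ?gq_ge0.
by rewrite qp_nsupp.
Qed.

Lemma a_pos_witness t : 0 < a t -> exists2 z0, z0 \in supp p & 0 < q z0 t.
Proof.
move=> at0; have [//|H] := pselect (exists2 z0, z0 \in supp p & 0 < q z0 t).
exfalso; suff : a t = 0 by move=> h; rewrite h ltxx in at0.
rewrite /outT big1 // => z _.
case: (boolP (z \in supp p)) => hz; last by rewrite nsupp0 // mul0r.
have /negP : ~ (0 < q z t) by move=> qz; apply: H; exists z.
rewrite lt_def q0 andbT negbK => /eqP ->; by rewrite mulr0.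
Qed.

Lemma outT_qp t : outT p (qprime p q) t = a t.
Proof.
case: (eqVneq (a t) 0) => [a00|an0].
  rewrite /outT big1 // => z _.
  case: (boolP (z \in supp p)) => hz; last by rewrite nsupp0 // mul0r.
  by rewrite qp_supp // /gq a00 mul0r; case: asboolP; rewrite mulr0.
have at0 : 0 < a t by rewrite lt_def an0 a_ge0.
have [z0 hz0 qz0] := a_pos_witness t at0.
have pw z : p z * qprime p q z t =
    (if z \in cl z0 then p z else 0) * (a t / pC (cl z0)).
  case: (boolP (z \in supp p)) => hz; last first.
    rewrite nsupp0 // mul0r; case: ifP => _; by rewrite mul0r.
  rewrite qp_supp // /gq; case: asboolP => hT.
    have e : cl z = cl z0 by apply/(T_of hz0 qz0 (cl_in hz)).
    by rewrite -e (self_cl hz).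
  case: ifPn => zc; last by rewrite mulr0 mul0r.
  exfalso; apply: hT; rewrite -(classes_mem (cl_in hz0) zc).
  by exists z0 => //; exact: self_cl.
rewrite /outT (eq_bigr _ (fun z _ => pw z)) -mulr_suml -big_mkcond /=.
by rewrite -/(pC (cl z0)) mulrC divfK // gt_eqF // pC_gt0 // cl_in.
Qed.

Lemma Tset_qp C : C \in classes p -> Tset q C = Tset (qprime p q) C.
Proof.
move=> hC; apply/seteqP; split => t /=.
  case=> z zC qz; exists z => //.
  have hz := classes_supp hC zC.
  rewrite qp_supp // /gq; case: asboolP => hT.
    rewrite divr_gt0 ?pC_gt0 ?cl_in //.
    exact: lt_le_trans (mulr_gt0 (supp_pos hz) qz) (a_ge z t).
  by exfalso; apply: hT; rewrite -(classes_mem hC zC); exists z.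
case=> z zC; have hz := classes_supp hC zC.
rewrite qp_supp // /gq; case: asboolP => hT; last by rewrite ltxx.
by rewrite -(classes_mem hC zC) in hT.
Qed.


Lemma esumW (f : (X * Y) * nat -> \bar R) : (forall v, (0 <= f v)%E) ->
  (\esum_(v in [set: (X * Y) * nat]) f v =
   \sum_z \esum_(t in [set: nat]) f (z, t))%E.
Proof.
move=> f0; rewrite -esumT_fin; last by move=> z; apply: esum_ge0.
rewrite esum_esum; last by move=> *; exact: f0.
have -> : [set: X * Y] `*`` (fun=> [set: nat]) = [set: (X * Y) * nat].
  by apply/seteqP; split.
by apply: eq_esum => -[z t].
Qed.

Lemma outT_ge (s : X * Y -> nat -> R) z t : (forall z t, 0 <= s z t) ->
  p z * s z t <= outT p s t.
Proof.
move=> s0; rewrite /outT (bigD1 z)//= lerDl.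
by apply: sumr_ge0 => i _; exact: mulr_ge0.
Qed.

Lemma kl_MI (s : X * Y -> nat -> R) : (forall z t, 0 <= s z t) -> forall v,
  kl_term (fun v : X * Y * nat => p v.1 * s v.1 v.2)
          (fun v : X * Y * nat => p v.1 * outT p s v.2) v =
  (p v.1 * s v.1 v.2 * ln (s v.1 v.2 / outT p s v.2))%:E.
Proof.
move=> s0 [z t] /=; rewrite /kl_term /=.
case: ifPn => [/eqP ->|h]; first by rewrite mul0r.
have hps : 0 < p z * s z t by rewrite lt_def h mulr_ge0.
have ho : 0 < outT p s t := lt_le_trans hps (outT_ge s z t s0).
have pz : p z != 0 by apply: contraNneq h => ->; rewrite mul0r.
rewrite mulf_eq0 (negbTE pz) gt_eqF //=.
congr ((_ * ln _)%:E); field.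
by rewrite pz gt_eqF.
Qed.


Local Notation qp := (qprime p q).
Local Notation pi z := (pC (cl z)).

Lemma a_pos_T z t : z \in supp p -> Tset q (cl z) t -> 0 < a t.
Proof.
move=> hz [z' hz' qz']; have hz'' := classes_supp (cl_in hz) hz'.
exact: lt_le_trans (mulr_gt0 (supp_pos hz'') qz') (a_ge z' t).
Qed.
Arguments a_pos_T {z t}.

Lemma qp_T z t : z \in supp p -> Tset q (cl z) t -> qp z t = a t / pi z.
Proof. by move=> hz hT; rewrite qp_supp // /gq asboolT. Qed.
Arguments qp_T {z t}.

Lemma qp_nT z t : z \in supp p -> ~ Tset q (cl z) t -> qp z t = 0.
Proof. by move=> hz hT; rewrite qp_supp // /gq asboolF. Qed.
Arguments qp_nT {z t}.

Lemma q_T z t : z \in supp p -> 0 < q z t -> Tset q (cl z) t.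
Proof. by move=> hz qz; exists z => //; exact: self_cl. Qed.
Arguments q_T {z t}.

Lemma pi_gt0 z : z \in supp p -> 0 < pi z.
Proof. by move=> hz; rewrite pC_gt0 // cl_in. Qed.
Arguments pi_gt0 {z}.

Lemma lnpi_le0 z : ln (pi z) <= 0.
Proof. by rewrite ln_le0 // pC_le1. Qed.

Lemma F1 z t : p z * qp z t * ln (qp z t / a t) = - (p z * ln (pi z)) * qp z t.
Proof.
case: (boolP (z \in supp p)) => hz; last by rewrite nsupp0 // !(mul0r, mulr0, oppr0).
case: (pselect (Tset q (cl z) t)) => hT; last by rewrite qp_nT // !(mulr0, mul0r).
have at0 := a_pos_T hz hT; have pz := pi_gt0 hz.
rewrite qp_T //.
have -> : a t / pi z / a t = (pi z)^-1 by field; rewrite !gt_eqF.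
rewrite lnV ?posrE //; ring.
Qed.

Lemma F2 z t : p z * q z t * ln (q z t / a t) =
  p z * q z t * ln (q z t / qp z t) - p z * ln (pi z) * q z t.
Proof.
case: (boolP (z \in supp p)) => hz; last by rewrite nsupp0 // !(mul0r, mulr0, subr0).
case: (eqVneq (q z t) 0) => [->|qn0]; first by rewrite !(mul0r, mulr0, subr0).
have qz : 0 < q z t by rewrite lt_def qn0 q0.
have hT := q_T hz qz.
have at0 := a_pos_T hz hT; have pz := pi_gt0 hz.
rewrite qp_T //.
have -> : q z t / (a t / pi z) = q z t / a t * pi z by field; rewrite !gt_eqF.
have hl : ln (q z t / a t * pi z) = ln (q z t / a t) + ln (pi z).
  by rewrite lnM ?posrE ?divr_gt0.
rewrite hl; ring.
Qed.

Definition ee z t := p z * (q z t * ln (q z t / qp z t) - q z t + qp z t).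
Definition cc z := p z * (1 - ln (pi z)).

Lemma ident z t : p z * q z t * ln (q z t / a t) =
  p z * qp z t * ln (qp z t / a t) + ee z t + cc z * (q z t - qp z t).
Proof. by rewrite F1 F2 /ee /cc; ring. Qed.

Lemma ee_ge0 z t : 0 <= ee z t /\ (ee z t = 0 -> z \in supp p -> q z t = qp z t).
Proof.
case: (boolP (z \in supp p)) => hz; last by rewrite /ee nsupp0 // mul0r.
have pz := supp_pos hz.
case: (eqVneq (q z t) 0) => [q00|qn0].
  rewrite /ee q00 !mul0r sub0r oppr0 add0r; split; first by rewrite mulr_ge0 ?qp_ge0.
  by move=> /eqP; rewrite mulf_eq0 gt_eqF //= => /eqP.
have qz : 0 < q z t by rewrite lt_def qn0 q0.
have hT := q_T hz qz.
have at0 := a_pos_T hz hT; have piz := pi_gt0 hz.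
have qpz : 0 < qp z t by rewrite qp_T // divr_gt0.
have h := ln_le_sub1 (qp z t / q z t) (divr_gt0 qpz qz).
rewrite ln_div ?posrE // in h.
have h2 : q z t * (ln (qp z t) - ln (q z t)) <= q z t * (qp z t / q z t - 1).
  by rewrite ler_pM2l.
have e3 : q z t * (qp z t / q z t - 1) = qp z t - q z t.
  by field; rewrite gt_eqF.
have eX : q z t * ln (q z t / qp z t) - q z t + qp z t =
    - (q z t * (ln (qp z t) - ln (q z t))) - q z t + qp z t.
  by rewrite ln_div ?posrE //; ring.
rewrite /ee eX; split; first by apply: mulr_ge0; [exact: ltW pz|lra].
move=> /eqP; rewrite mulf_eq0 gt_eqF //= => /eqP h0 _.
have h3 : q z t * (ln (qp z t) - ln (q z t)) = q z t * (qp z t / q z t - 1).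
  by rewrite e3; lra.
have h4 := mulfI (negbT (gt_eqF qz)) h3.
rewrite -ln_div ?posrE // in h4.
have := ln_eq_sub1 _ (divr_gt0 qpz qz) h4.
by move=> h5; rewrite -[qp z t](divfK (negbT (gt_eqF qz))) h5 mul1r.
Qed.

Lemma cc_ge0 z : 0 <= cc z.
Proof. by rewrite /cc mulr_ge0 //; have := lnpi_le0 z; lra. Qed.

Lemma mqp_ge0 z t : 0 <= p z * qp z t * ln (qp z t / a t).
Proof.
rewrite F1 mulNr oppr_ge0; apply: mulr_le0_ge0; last exact: qp_ge0.
by apply: mulr_ge0_le0 => //; exact: lnpi_le0.
Qed.

Lemma mneg_le z t : Num.max (- (p z * q z t * ln (q z t / a t))) 0 <= p z * a t.
Proof.
have pa0 : 0 <= p z * a t by rewrite mulr_ge0 ?a_ge0.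
rewrite maxEle; case: ifP => // _.
case: (eqVneq (p z * q z t) 0) => [->|h]; first by rewrite mul0r oppr0.
have hpq : 0 < p z * q z t by rewrite lt_def h mulr_ge0.
have at0 : 0 < a t := lt_le_trans hpq (a_ge z t).
have qz : 0 < q z t.
  by rewrite lt_def q0 andbT; apply: contraNneq h => ->; rewrite mulr0.
have pz : 0 < p z.
  by rewrite lt_def p0 andbT; apply: contraNneq h => ->; rewrite mul0r.
have hl := ln_le_sub1 (a t / q z t) (divr_gt0 at0 qz).
have e1 : ln (q z t / a t) = - ln (a t / q z t).
  by rewrite !ln_div ?posrE //; ring.
rewrite e1.
have h2 : p z * q z t * ln (a t / q z t) <= p z * q z t * (a t / q z t - 1).
  by rewrite ler_pM2l.
have e3 : p z * q z t * (a t / q z t - 1) = p z * a t - p z * q z t.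
  by field; rewrite gt_eqF.
have -> : - (p z * q z t * - ln (a t / q z t)) = p z * q z t * ln (a t / q z t) by ring.
lra.
Qed.

Lemma esq1p z : (\esum_(t in [set: nat]) (qp z t)%:E)%E = 1%E.
Proof.
case: (boolP (z \in supp p)) => hz; last first.
  by under eq_esum do rewrite qp_nsupp //; exact: esq1.
have piz := pi_gt0 hz.
transitivity (\esum_(t in [set: nat]) (if t \in Tset q (cl z) then
    ((pi z)^-1 * a t)%:E else 0))%E.
  apply: eq_esum => t _; rewrite qp_supp // /gq; case: asboolP => h.
    by rewrite mem_set // mulrC.
  by rewrite memNset.
rewrite -esum_mkcond esumZ_nat ?invr_ge0 ?ltW //; last exact: a_ge0.
by rewrite esum_a ?cl_in // -EFinM mulVf // gt_eqF.
Qed.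

Lemma esum_cq (f : X * Y -> nat -> R) (cst : X * Y -> R) :
  (forall z, 0 <= cst z) -> (forall z t, 0 <= f z t) ->
  (forall z, (\esum_(t in [set: nat]) (f z t)%:E)%E = 1%E) ->
  (\esum_(v in [set: (X * Y) * nat]) (cst v.1 * f v.1 v.2)%:E)%E =
  (\sum_z cst z)%:E.
Proof.
move=> c0 f0 f1; rewrite esumW; last by move=> v; rewrite lee_fin mulr_ge0.
under eq_bigr do rewrite /= esumZ_nat // f1 mule1.
by rewrite sumEFin.
Qed.

Lemma part_iv : (MI p qp <= MI p q)%E /\ (MI p q = MI p qp <-> q = qp).
Proof.
pose m (v : (X * Y) * nat) := p v.1 * q v.1 v.2 * ln (q v.1 v.2 / a v.2).
pose m' (v : (X * Y) * nat) := p v.1 * qp v.1 v.2 * ln (qp v.1 v.2 / a v.2).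
have MIq : MI p q = xsum (fun v => (m v)%:E).
  by rewrite /MI /KL (funext (kl_MI q q0)).
have MIqp : MI p qp = xsum (fun v => (m' v)%:E).
  rewrite /MI /KL; congr xsum; apply: funext => v.
  by rewrite kl_MI ?outT_qp // => z t; exact: qp_ge0.
have iff2 : q = qp -> MI p q = MI p qp by move=> h; rewrite {1}h.
rewrite MIq MIqp !xsumE in iff2 *.
have mx0 (x : R) : 0 <= Num.max x 0 by rewrite le_max lexx orbT.
have m'pos v : Num.max (m' v) 0 = m' v.
  rewrite maxEle; case: lerP => h //.
  by have := mqp_ge0 v.1 v.2; rewrite -/(m' v); lra.
have m'neg v : Num.max (- m' v) 0 = 0.
  rewrite maxEle; case: lerP => h //; exfalso.
  by have := mqp_ge0 v.1 v.2; rewrite -/(m' v); lra.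
have pw v : Num.max (m v) 0 + cc v.1 * qp v.1 v.2 =
    m' v + Num.max (- m v) 0 + ee v.1 v.2 + cc v.1 * q v.1 v.2.
  have h1 := ident v.1 v.2; have h2 := maxr_posneg (m v).
  rewrite /m /m' in h2 *; lra.
have ccq v : 0 <= cc v.1 * q v.1 v.2 by rewrite mulr_ge0 ?cc_ge0.
have ccqp v : 0 <= cc v.1 * qp v.1 v.2 by rewrite mulr_ge0 ?cc_ge0 ?qp_ge0.
have ee0 v : 0 <= ee v.1 v.2 by exact: (proj1 (ee_ge0 v.1 v.2)).
have m'0 v : 0 <= m' v by exact: mqp_ge0.
have HEq : (\esum_(v in [set: (X * Y) * nat]) (Num.max (m v) 0)%:E +
            \esum_(v in [set: (X * Y) * nat]) (cc v.1 * qp v.1 v.2)%:E =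
            \esum_(v in [set: (X * Y) * nat]) (m' v)%:E +
            \esum_(v in [set: (X * Y) * nat]) (Num.max (- m v) 0)%:E +
            \esum_(v in [set: (X * Y) * nat]) (ee v.1 v.2)%:E +
            \esum_(v in [set: (X * Y) * nat]) (cc v.1 * q v.1 v.2)%:E)%E.
  rewrite -!esumD; try by move=> v _; rewrite ?adde_ge0 ?lee_fin.
  by apply: eq_esum => v _; rewrite -!EFinD pw.
rewrite (esum_cq qp cc cc_ge0 (fun z t => qp_ge0 z t) esq1p) in HEq.
rewrite (esum_cq q cc cc_ge0 q0 esq1) in HEq.
have Sm' : (\esum_(v in [set: (X * Y) * nat]) (m' v)%:E)%E =
    (\sum_z (- (p z * ln (pi z))))%:E.
  rewrite -(esum_cq qp (fun z => - (p z * ln (pi z)))).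
  - by apply: eq_esum => v _; rewrite /m' F1.
  - move=> z; rewrite oppr_ge0; apply: mulr_ge0_le0 => //; exact: lnpi_le0.
  - by move=> z t; exact: qp_ge0.
  - exact: esq1p.
rewrite Sm' in HEq.
have SMle : (\esum_(v in [set: (X * Y) * nat]) (Num.max (- m v) 0)%:E <= 1)%E.
  apply: (le_trans (le_esum (b := fun v => (p v.1 * a v.2)%:E) _)).
    by move=> v _; rewrite lee_fin; exact: mneg_le.
  rewrite (esum_cq (fun _ t => a t) p) // ?psum //.
  - by move=> _ t; exact: a_ge0.
  - by move=> _; rewrite /outT esum_lin // psum.
have fM : (\esum_(v in [set: (X * Y) * nat]) (Num.max (- m v) 0)%:E)%E \is a fin_num.
  rewrite ge0_fin_numE; last by apply: esum_ge0 => v _; rewrite lee_fin.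
  exact: le_lt_trans SMle (ltry _).
have Sm'0 : (\esum_(v in [set: (X * Y) * nat]) (Num.max (- m' v) 0)%:E)%E = 0%E.
  by apply: esum1 => v _; rewrite m'neg.
have Sm'p : (\esum_(v in [set: (X * Y) * nat]) (Num.max (m' v) 0)%:E)%E =
    (\sum_z (- (p z * ln (pi z))))%:E.
  by rewrite -Sm'; apply: eq_esum => v _; rewrite m'pos.
rewrite Sm'0 Sm'p sube0 in iff2 *.
have Ee0 : (0 <= \esum_(v in [set: (X * Y) * nat]) (ee v.1 v.2)%:E)%E.
  by apply: esum_ge0 => v _; rewrite lee_fin.
have Mp0 : (0 <= \esum_(v in [set: (X * Y) * nat]) (Num.max (m v) 0)%:E)%E.
  by apply: esum_ge0 => v _; rewrite lee_fin.
have key : (\esum_(v in [set: (X * Y) * nat]) (Num.max (m v) 0)%:E -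
            \esum_(v in [set: (X * Y) * nat]) (Num.max (- m v) 0)%:E =
            (\sum_z (- (p z * ln (pi z))))%:E +
            \esum_(v in [set: (X * Y) * nat]) (ee v.1 v.2)%:E)%E.
  move: HEq; rewrite -(fineK fM).
  move: (\esum_(v in [set: (X * Y) * nat]) (Num.max (m v) 0)%:E)%E Mp0.
  move: (\esum_(v in [set: (X * Y) * nat]) (ee v.1 v.2)%:E)%E Ee0.
  move=> [y| |] y0 [x| |] x0 //=; rewrite -?EFinD.
  by move=> [h]; congr EFin; lra.
rewrite key in iff2 *.
split; first by rewrite leeDl.
split=> // h.
have See : (\esum_(v in [set: (X * Y) * nat]) (ee v.1 v.2)%:E)%E = 0%E.
  move: h Ee0; move: (\esum_(v in [set: (X * Y) * nat]) (ee v.1 v.2)%:E)%E.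
  by move=> [y| |] //=; rewrite -EFinD => -[h] _; congr EFin; lra.
apply: funext => z; apply: funext => t.
case: (boolP (z \in supp p)) => hz; last by rewrite qp_nsupp.
apply: (proj2 (ee_ge0 z t)) => //.
apply/le_anti; rewrite (proj1 (ee_ge0 z t)) andbT.
have := @esum_ge1 R _ (fun v : (X * Y) * nat => (ee v.1 v.2)%:E) (z, t)
  (fun v => ee0 v).
by rewrite /= See lee_fin.
Qed.

Lemma main_all :
  [/\ (forall z, z \in supp p -> forall C, C \in classes p ->
         setsum (q z) (Tset q C) = (if z \in C then 1 else 0)),
      (forall t, outT p qp t = outT p q t),
      (forall C, C \in classes p -> Tset q C = Tset qp C) &
      ((MI p qp <= MI p q)%E /\
       (MI p q = MI p qp <-> q = qp))].
Proof.
split.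
- by move=> z hz C hC; exact: setsum_i.
- exact: outT_qp.
- exact: Tset_qp.
- exact: part_iv.
Qed.

End WithHKL.
End Main.

Theorem lemma12 (R : realType) (X Y : finType) (p : X * Y -> R)
    (q : X * Y -> nat -> R) :
  is_dist p ->
  (forall x, 0 < pX p x) -> (forall y, 0 < pY p y) ->
  channel q ->
  KL (outT p q) (outTt p q) = KL p (pXpY p) ->
  [/\ (forall z, z \in supp p -> forall C, C \in classes p ->
         setsum (q z) (Tset q C) = (if z \in C then 1 else 0)),
      (forall t, outT p (qprime p q) t = outT p q t),
      (forall C, C \in classes p -> Tset q C = Tset (qprime p q) C) &
      ((MI p (qprime p q) <= MI p q)%E /\
       (MI p q = MI p (qprime p q) <-> q = qprime p q))].
Proof.
move=> [p0 p1] hX hY [q0 q1] HKL.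
by apply: main_all.
Qed.
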